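(* Let $\mathbf{G}=(G_1,\dots,G_5)$ be a $5$-multigraph on four vertices not containing three crossing pairs and set $e=e(\mathbf{G})$. (i) If $e\ge 23$, then there exists an enumeration $V(\mathbf{G})=\{w,x,y,z\}$ such that $e(w,x)+e(y,z)\le 5$. (ii) If $e\ge 22$, then there exist two distinct vertices $u$ and $v$ with $e(u,v)=5$.
   Context: A $5$-multigraph $\mathbf{G}=(G_1,\dots,G_5)$ is a $5$-tuple of simple graphs on a common vertex set $V(\mathbf{G})$; $e(\mathbf{G})=\sum_{i=1}^5 e(G_i)$, and for distinct vertices $u,v$ the multiplicity $e(u,v)$ is the number of indices $i$ with $uv\in E(G_i)$. $\mathbf{G}$ contains three crossing pairs if there are three distinct indices $i,j,k\in[5]$ and four distinct vertices $w,x,y,z$ with $wx,yz\in E(G_i)$, $wy,xz\in E(G_j)$ and $wz,xy\in E(G_k)$. *)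

(* Defs.v *)
From mathcomp Require Import all_boot.
Set Implicit Arguments. Unset Strict Implicit. Unset Printing Implicit Defensive.

Definition simple_graph (T : finType) (g : rel T) : Prop :=
  (forall u v, g u v = g v u) /\ (forall u, ~~ g u u).

Definition multigraph5 (T : finType) := 'I_5 -> rel T.

Definition is_multigraph5 (T : finType) (G : multigraph5 T) : Prop :=
  forall i, simple_graph (G i).

Definition edges (T : finType) (g : rel T) : {set {set T}} :=
  [set s : {set T} | [exists u, exists v, (u != v) && g u v && (s == [set u; v])]].

Definition e_tot (T : finType) (G : multigraph5 T) : nat :=
  \sum_(i < 5) #|edges (G i)|.

Definition mult (T : finType) (G : multigraph5 T) (u v : T) : nat :=
  #|[set i : 'I_5 | G i u v]|.

Definition three_crossing_pairs (T : finType) (G : multigraph5 T) : Prop :=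
  exists (i j k : 'I_5) (w x y z : T),
    [/\ i != j, i != k, j != k &
    [/\ uniq [:: w; x; y; z],
        G i w x && G i y z,
        G j w y && G j x z &
        G k w z && G k x y]].

(* Main.v *)
Require Import Defs.
From mathcomp Require Import all_boot zify.

Lemma cardU_le (T : finType) (A B : {set T}) : #|A :|: B| <= #|A| + #|B|.
Proof. by rewrite -cardsUI leq_addr. Qed.

Lemma multM (T : finType) (G : multigraph5 T) u v x y :
  mult G u v + mult G x y <= 5 + #|[set i | G i u v && G i x y]|.
Proof.
rewrite /mult -cardsUI.
have -> : [set i | G i u v] :&: [set i | G i x y] = [set i | G i u v && G i x y].
  by apply/setP => i; rewrite !inE.
by rewrite leq_add2r (leq_trans (max_card _)) ?card_ord.
Qed.

Lemma mult5 (T : finType) (G : multigraph5 T) u v : mult G u v <= 5.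
Proof. by rewrite /mult (leq_trans (max_card _)) ?card_ord. Qed.

Lemma mult_sum (T : finType) (G : multigraph5 T) u v : mult G u v = \sum_(i < 5) G i u v.
Proof.
rewrite /mult -sum1dep_card big_mkcond /=; apply: eq_bigr => i _.
by case: (G i u v).
Qed.

Definition SDR (A B C : {set 'I_5}) :=
  exists i j k, [/\ i \in A, j \in B, k \in C & [/\ i != j, i != k & j != k]].

Lemma greedy (A B C : {set 'I_5}) : 0 < #|A| -> 1 < #|B| -> 2 < #|C| -> SDR A B C.
Proof.
move=> /card_gt0P [i Ai] hB hC.
have : 0 < #|B :\ i|.
  by move: hB; rewrite (cardsD1 i B); case: (i \in B) => /=; lia.
move=> /card_gt0P [j]; rewrite !inE => /andP [ji Bj].
have : 0 < #|C :\ i :\ j|.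
  move: hC; rewrite (cardsD1 i C) (cardsD1 j (C :\ i)).
  by case: (i \in C); case: (j \in C :\ i) => /=; lia.
move=> /card_gt0P [k]; rewrite !inE => /andP [kj /andP [ki Ck]].
exists i, j, k; split => //; split => //; by rewrite eq_sym.
Qed.

Lemma nosdr (A B C : {set 'I_5}) : ~ SDR A B C ->
  (~ (0 < #|A| /\ 1 < #|B| /\ 2 < #|C|)) /\
      (~ (0 < #|A| /\ 1 < #|C| /\ 2 < #|B|)) /\
      (~ (0 < #|B| /\ 1 < #|A| /\ 2 < #|C|)) /\
      (~ (0 < #|B| /\ 1 < #|C| /\ 2 < #|A|)) /\
      (~ (0 < #|C| /\ 1 < #|A| /\ 2 < #|B|)) /\
      (~ (0 < #|C| /\ 1 < #|B| /\ 2 < #|A|)).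
Proof.
move=> H; do !split; move=> -[h1 [h2 h3]]; apply: H.
- exact: greedy.
- have [i [k [j [? ? ? [? ? ?]]]]] := @greedy _ _ _ h1 h2 h3.
  by exists i, j, k; split => //; split => //; rewrite eq_sym.
- have [j [i [k [? ? ? [? ? ?]]]]] := @greedy _ _ _ h1 h2 h3.
  by exists i, j, k; split => //; split => //; rewrite eq_sym.
- have [j [k [i [? ? ? [? ? ?]]]]] := @greedy _ _ _ h1 h2 h3.
  by exists i, j, k; split => //; split => //; rewrite eq_sym.
- have [k [i [j [? ? ? [? ? ?]]]]] := @greedy _ _ _ h1 h2 h3.
  by exists i, j, k; split => //; split => //; rewrite eq_sym.
- have [k [j [i [? ? ? [? ? ?]]]]] := @greedy _ _ _ h1 h2 h3.
  by exists i, j, k; split => //; split => //; rewrite eq_sym.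
Qed.

Definition Sp {T : finType} (g : rel T) (u v : T) : {set {set T}} :=
  [set s | g u v && ((s == [set u; v]) || (s == [set v; u]))].

Lemma Sp_card (T : finType) (g : rel T) u v : #|Sp g u v| <= g u v.
Proof.
rewrite /Sp; case: (g u v) => /=.
  rewrite (leq_trans (subset_leq_card (_ : _ \subset [set [set u; v]]))) ?cards1 //.
  by apply/subsetP => s; rewrite !inE => /orP [] /eqP ->; rewrite // setUC.
by rewrite leqn0 cards_eq0; apply/eqP/setP => s; rewrite !inE.
Qed.

Lemma edges_le (T : finType) (g : rel T) a b c d :
  simple_graph g -> (forall x, x \in [:: a; b; c; d]) ->
  #|edges g| <= g a b + g a c + g a d + g b c + g b d + g c d.
Proof.
move=> [sym irr] hall.
have sub : edges g \subset Sp g a b :|: Sp g a c :|: Sp g a d :|: Sp g b c :|: Sp g b d :|: Sp g c d.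
  apply/subsetP => s; rewrite inE => /existsP [u /existsP [v /andP [/andP [uv guv] /eqP ->]]].
  have guv' : g v u by rewrite sym.
  move: (hall u) (hall v) uv guv guv'; rewrite !inE.
  by move=> /or4P [] /eqP -> /or4P [] /eqP -> //; rewrite ?eqxx // => _ h1 h2; rewrite ?h1 ?h2 ?eqxx /= ?orbT ?andbT ?h1 ?h2 /= ?orbT.
apply: (leq_trans (subset_leq_card sub)).
do 5 (apply: (leq_trans (cardU_le _ _ _)); apply: leq_add; last exact: Sp_card).
exact: Sp_card.
Qed.

Theorem lemma3p5 (T : finType) (G : multigraph5 T) :
  is_multigraph5 G -> #|T| = 4 -> ~ three_crossing_pairs G ->
  (23 <= e_tot G ->
     exists w x y z : T, uniq [:: w; x; y; z] /\ mult G w x + mult G y z <= 5) /\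
  (22 <= e_tot G -> exists u v : T, u != v /\ mult G u v = 5).
Proof.
move=> hG h4 hnc.
have hs : size (enum T) = 4 by rewrite -cardE.
have hu := enum_uniq T.
have hall : forall x, x \in enum T by move=> x; rewrite mem_enum.
move: hs hu hall; case: (enum T) => [|a [|b [|c [|d [|? ?]]]]] //= _ hu hall.
have he : e_tot G <= mult G a b + mult G a c + mult G a d + mult G b c + mult G b d + mult G c d.
  rewrite /e_tot !(@mult_sum _ G) -!big_split /=; apply: leq_sum => i _.
  exact: edges_le.
have m1 := @multM _ G a b c d.
have m2 := @multM _ G a c b d.
have m3 := @multM _ G a d b c.
have hsdr : ~ SDR [set i | G i a b && G i c d] [set i | G i a c && G i b d] [set i | G i a d && G i b c].
  move=> [i [j [k [hi hj hk [ij ik jk]]]]]; apply: hnc.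
  rewrite !inE in hi hj hk; exists i, j, k, a, b, c, d; by do !split.
have [n1 [n2 [n3 [n4 [n5 n6]]]]] := @nosdr _ _ _ hsdr.
have := @mult5 _ G a b; have := @mult5 _ G a c; have := @mult5 _ G a d.
have := @mult5 _ G b c; have := @mult5 _ G b d; have := @mult5 _ G c d.
move: he m1 m2 m3 n1 n2 n3 n4 n5 n6.
set N1 := #|_|; set N2 := #|_|; set N3 := #|_|.
set Mab := mult G a b; set Mac := mult G a c; set Mad := mult G a d.
set Mbc := mult G b c; set Mbd := mult G b d; set Mcd := mult G c d.
move=> he m1 m2 m3 n1 n2 n3 n4 n5 n6 q1 q2 q3 q4 q5 q6.
have ab : a != b by move: hu; rewrite /= !inE; case: (a == b).
have ac : a != c by move: hu; rewrite /= !inE; case: (a == c); rewrite ?orbT.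
have ad : a != d by move: hu; rewrite /= !inE; case: (a == d); rewrite ?orbT.
have bc : b != c by move: hu; rewrite /= !inE; case: (b == c); rewrite ?orbT ?andbF.
have bd : b != d by move: hu; rewrite /= !inE; case: (b == d); rewrite ?orbT ?andbF.
have cd : c != d by move: hu; rewrite /= !inE; case: (c == d); rewrite ?orbT ?andbF.
split.
- move=> h23.
  have : Mab + Mcd <= 5 \/ Mac + Mbd <= 5 \/ Mad + Mbc <= 5 by lia.
  case=> [h|[h|h]].
  + by exists a, b, c, d.
  + exists a, c, b, d; split => //.
    have cb : c != b by rewrite eq_sym.
    by rewrite /= !inE !negb_or ac ab ad cb cd bd.
  + exists a, d, b, c; split => //.
    have db : d != b by rewrite eq_sym.
    have dc : d != c by rewrite eq_sym.
    by rewrite /= !inE !negb_or ad ab ac db dc bc.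
- move=> h22.
  have : Mab = 5 \/ Mac = 5 \/ Mad = 5 \/ Mbc = 5 \/ Mbd = 5 \/ Mcd = 5 by lia.
  case=> [h|[h|[h|[h|[h|h]]]]]; by [exists a, b | exists a, c | exists a, d | exists b, c | exists b, d | exists c, d].
Qed.
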